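(* Let $m\ge2$, $q\in(0,1)$, let $\psi$ be a completely monotone Archimedean copula generator and $Z$ a positive random variable with Laplace transform $\psi(t)=\mathbb E[e^{-tZ}]$ and cdf $F_Z$. Define $$\gamma_{min}=\int\min_{k\in\{1,\dots,m\}}\left\{\frac{\exp(-z\psi^{-1}(kq/m))}{kq/m}\right\}dF_Z(z),\qquad g(x\mid z)=\frac{\exp(-zx)}{\psi(x)},\qquad z^*=\frac{\log m}{\psi^{-1}(q/m)-\psi^{-1}(q)}.$$ Then $$\gamma_{min}=1-\int_0^{z^*}\bigl(g(\psi^{-1}(q/m)\mid z)-g(\psi^{-1}(q)\mid z)\bigr)dF_Z(z)=1-\mathbb E\bigl[(g(\psi^{-1}(q/m)\mid Z)-g(\psi^{-1}(q)\mid Z))\mathbf 1_{[0,z^*]}(Z)\bigr].$$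
   Context: Completely monotone generator: $\psi:[0,\infty)\to[0,1]$, $\psi(0)=1$, $\lim_{x\to\infty}\psi(x)=0$, $(-1)^d\psi^{(d)}\ge0$ for all $d\in\mathbb N$; $\psi^{-1}$ is its inverse. *)

(* Defs.v *)
From mathcomp Require Import all_boot all_order all_algebra.
From mathcomp Require Import all_classical all_reals all_analysis.
Set Implicit Arguments. Unset Strict Implicit. Unset Printing Implicit Defensive.
Import Order.TTheory GRing.Theory Num.Theory.
Import numFieldNormedType.Exports.
Local Open Scope classical_set_scope.
Local Open Scope ring_scope.

Definition gcond (R : realType) (psi : R -> R) (x z : R) : R :=
  expR (- (z * x)) / psi x.

(* min_{k in {1,...,m}} exp(-z psiinv(kq/m)) / (kq/m) ; the fold starts at the
   k = 1 term, which is itself among the minimized terms (minr is idempotent). *)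
Definition min_term (R : realType) (psiinv : R -> R) (m : nat) (q z : R) : R :=
  let h := fun k : nat => expR (- (z * psiinv (k%:R * q / m%:R))) / (k%:R * q / m%:R) in
  \big[Num.min/h 1%N]_(1 <= k < m.+1) h k.

Definition CM_generator (R : realType) (psi : R -> R) : Prop :=
  [/\ forall t, 0 <= t -> 0 <= psi t <= 1,
      psi 0 = 1,
      psi x @[x --> +oo] --> (0 : R),
      forall (d : nat) (x : R), 0 < x -> derivable (derive1n d psi) x 1
    & forall (d : nat) (x : R), 0 < x -> 0 <= (-1) ^+ d * derive1n d psi x].

(* Main.v *)
Require Import Defs.
From mathcomp Require Import all_boot all_order all_algebra.
From mathcomp Require Import all_classical all_reals all_analysis.
From mathcomp Require Import ring lra zify measurable_realfun.
Import Order.TTheory GRing.Theory Num.Theory.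
Local Open Scope classical_set_scope.
Local Open Scope ring_scope.

Lemma expR_tan (R : realType) (x u : R) : expR x * (1 + (u - x)) <= expR u.
Proof.
have -> : expR u = expR x * expR (u - x) by rewrite -expRD subrKC.
by apply: ler_wpM2l; [exact: expR_ge0|exact: expR_ge1Dx].
Qed.

Lemma expR_conv (R : realType) (t u v : R) : 0 <= t <= 1 ->
  expR (t*u + (1-t)*v) <= t * expR u + (1-t) * expR v.
Proof.
move=> /andP[t0 t1].
have hu := expR_tan R (t*u + (1-t)*v) u.
have hv := expR_tan R (t*u + (1-t)*v) v.
set x := t*u + (1-t)*v in hu hv *.
have -> : expR x = t * (expR x * (1 + (u - x))) + (1 - t) * (expR x * (1 + (v - x))).
  rewrite /x; ring.
by rewrite lerD // ler_wpM2l // subr_ge0.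
Qed.

Lemma mexpR (R : realType) (c d : R) :
  measurable_fun [set: R] (fun z : R => expR (- (z * c)) * d).
Proof.
apply: measurable_funM => //.
apply: measurableT_comp; first exact: measurable_expR.
have -> : (fun z : R => - (z * c)) = (fun z => z * (- c)) by apply: funext => z; rewrite mulrN.
exact: mulrr_measurable.
Qed.

Lemma mexpT (R : realType) (d : measure_display) (T : measurableType d)
  (P : probability T R) (Z : {RV P >-> R}) (t : R) :
  measurable_fun [set: T] (fun w => expR (- (t * Z w))).
Proof.
apply: measurableT_comp; first exact: measurable_expR.
apply: measurable_funN.
apply: measurable_funM => //.
Qed.

Lemma min_lel (R : realType) (x y z : R) : x <= z -> Num.min x y <= z.
Proof. by move=> h; rewrite ge_min h. Qed.
Lemma min_ler (R : realType) (x y z : R) : y <= z -> Num.min x y <= z.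
Proof. by move=> h; rewrite ge_min h orbT. Qed.
Lemma min_glb (R : realType) (x y z : R) : z <= x -> z <= y -> z <= Num.min x y.
Proof. by move=> h1 h2; rewrite le_min h1 h2. Qed.

Lemma bigmin_le (R : realType) (x : R) (s : seq nat) (F : nat -> R) j :
  j \in s -> \big[Num.min/x]_(i <- s) F i <= F j.
Proof.
elim: s => [//|i s IH]; rewrite in_cons big_cons => /orP[/eqP->|js].
  exact: min_lel.
by apply: min_ler; exact: IH.
Qed.

Lemma bigmin_le' (R : realType) (x : R) (s : seq nat) (F : nat -> R) j z :
  j \in s -> F j <= z -> \big[Num.min/x]_(i <- s) F i <= z.
Proof. by move=> js h; exact: le_trans (bigmin_le R x s F j js) h. Qed.

Lemma minE_r (R : realType) (x y : R) : y <= x -> Num.min x y = y.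
Proof. by move=> h; apply/le_anti/andP; split; [apply: min_ler|apply: min_glb]. Qed.
Lemma minE_l (R : realType) (x y : R) : x <= y -> Num.min x y = x.
Proof. by move=> h; apply/le_anti/andP; split; [apply: min_lel|apply: min_glb]. Qed.

Theorem lemma1 (R : realType) (d : measure_display) (T : measurableType d)
  (P : probability T R) (Z : {RV P >-> R}) (psi psiinv : R -> R) (m : nat) (q : R) :
  (2 <= m)%N -> 0 < q < 1 ->
  CM_generator psi ->
  (forall w, 0 < Z w) ->
  (forall t, 0 <= t -> ((psi t)%:E = \int[P]_w (expR (- (t * Z w)))%:E)%E) ->
  (forall y, 0 < y <= 1 -> 0 <= psiinv y /\ psi (psiinv y) = y) ->
  let zstar := ln m%:R / (psiinv (q / m%:R) - psiinv q) in
  let S : set R := [set` `[0, zstar]] in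
  let gamma_min := (\int[distribution P Z]_z (min_term psiinv m q z)%:E)%E in
  let I := (\int[distribution P Z]_(z in S)
             (gcond psi (psiinv (q / m%:R)) z - gcond psi (psiinv q) z)%:E)%E in
  gamma_min = (1 - I)%E /\
  I = (\int[P]_w ((gcond psi (psiinv (q / m%:R)) (Z w) - gcond psi (psiinv q) (Z w))
                  * \1_(S) (Z w))%:E)%E.
Proof.
move=> hm hq hpsi hZ hlap hinv zstar S gamma_min I.
have m0 : 0 < m%:R :> R by rewrite ltr0n (leq_trans _ hm).
have m1 : 1 < m%:R :> R by rewrite ltr1n.
move/andP: hq => [q0 q1].
have qm_lt : q / m%:R < q by rewrite ltr_pdivrMr // ltr_pMr.
have qm0 : 0 < q / m%:R by rewrite divr_gt0.
have [a0 pa] : 0 <= psiinv (q / m%:R) /\ psi (psiinv (q / m%:R)) = q / m%:R.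
  by apply: hinv; rewrite qm0 /= (le_trans (ltW qm_lt) (ltW q1)).
have [b0 pb] : 0 <= psiinv q /\ psi (psiinv q) = q by apply: hinv; rewrite q0 ltW.
set a := psiinv (q / m%:R) in a0 pa zstar S I *.
set b := psiinv q in b0 pb zstar S I *.
have mon : forall x y, 0 <= x -> x <= y -> psi y <= psi x.
  move=> x y x0 xy; rewrite -lee_fin hlap ?(le_trans x0 xy) // hlap //.
  apply: ge0_le_integral => //.
  - by apply/measurable_EFinP; exact: mexpT.
  - by apply/measurable_EFinP; exact: mexpT.
  - move=> w _; rewrite lee_fin ler_expR lerN2; apply: ler_wpM2r => //.
    exact: ltW (hZ w).
have ab : b < a.
  rewrite ltNge; apply/negP => ab; have := mon a b a0 ab.
  by rewrite pa pb leNgt qm_lt.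
have psiE : forall y c, 0 <= y -> 0 <= c ->
    ((psi y * c)%:E = \int[P]_w (expR (- (y * Z w)) * c)%:E)%E.
  move=> y c y0 c0; rewrite EFinM hlap // -ge0_integralZr //.
  all: try (by apply/measurable_EFinP; exact: mexpT).
  all: try (by move=> w _; rewrite lee_fin expR_ge0).
  all: try (by rewrite lee_fin).
have intZ : forall k y c, 0 <= k -> 0 <= y -> 0 <= c ->
    (\int[P]_w (k * (expR (- (y * Z w)) * c))%:E = (k * (psi y * c))%:E)%E.
  move=> k y c k0 y0 c0.
  under eq_integral => w _ do rewrite EFinM.
  rewrite ge0_integralZl_EFin //.
  - by rewrite -psiE // EFinM.
  - by move=> w _; rewrite lee_fin mulr_ge0 ?expR_ge0.
  - apply/measurable_EFinP; apply: measurable_funM => //; exact: mexpT.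
have cvx : forall z x, b <= x -> x <= a ->
    psi x * expR (z * x) <= Num.max (psi a * expR (z * a)) (psi b * expR (z * b)).
  move=> z x bx xa.
  have ab0 : 0 < a - b by rewrite subr_gt0.
  set t := (x - b) / (a - b).
  have t01 : 0 <= t <= 1.
    by rewrite /t divr_ge0 ?subr_ge0 ?(ltW ab) //= ler_pdivrMr // mul1r lerD2r.
  have xE : x = t * a + (1 - t) * b.
    by rewrite /t; field; rewrite lt0r_neq0.
  have x0 : 0 <= x := le_trans b0 bx.
  have pt : forall w, expR (- (x * Z w)) * expR (z * x) <=
      t * (expR (- (a * Z w)) * expR (z * a)) + (1 - t) * (expR (- (b * Z w)) * expR (z * b)).
    move=> w; rewrite -!expRD.
    have -> : - (x * Z w) + z * x =
        t * (- (a * Z w) + z * a) + (1 - t) * (- (b * Z w) + z * b).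
      by rewrite [in LHS]xE; ring.
    exact: expR_conv.
  move/andP: t01 => [t0 t1].
  have t1' : 0 <= 1 - t by rewrite subr_ge0.
  rewrite -lee_fin psiE ?expR_ge0 //.
  apply: (@le_trans _ _ (\int[P]_w (t * (expR (- (a * Z w)) * expR (z * a))
       + (1 - t) * (expR (- (b * Z w)) * expR (z * b)))%:E)%E).
    apply: ge0_le_integral => //.
    - apply/measurable_EFinP; apply: measurable_funM => //; exact: mexpT.
    - apply/measurable_EFinP; apply: measurable_funD => //;
        apply: measurable_funM => //; apply: measurable_funM => //; exact: mexpT.
    - by move=> w _; rewrite lee_fin pt.
  under eq_integral => w _ do rewrite EFinD.
  rewrite ge0_integralD //.
  - rewrite !intZ ?expR_ge0 // -EFinD lee_fin.
    set M := Num.max _ _.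
    have h1 : psi a * expR (z * a) <= M by rewrite le_max lexx.
    have h2 : psi b * expR (z * b) <= M by rewrite le_max lexx orbT.
    nra.
  all: try (by move=> w _; rewrite lee_fin; apply: mulr_ge0 => //; apply: mulr_ge0; exact: expR_ge0).
  all: try (by apply/measurable_EFinP; apply: measurable_funM => //; apply: measurable_funM => //; exact: mexpT).
have gE : forall x z, gcond psi x z = (psi x * expR (z * x))^-1.
  by move=> x z; rewrite /gcond expRN invfM mulrC.
have pa0 : forall z, 0 < psi a * expR (z * a) by move=> z; rewrite pa mulr_gt0 ?expR_gt0.
have pb0 : forall z, 0 < psi b * expR (z * b) by move=> z; rewrite pb mulr_gt0 ?expR_gt0.
have lowb : forall z y, q / m%:R <= y <= q ->
    Num.min (gcond psi a z) (gcond psi b z) <= expR (- (z * psiinv y)) / y.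
  move=> z y /andP[y1 y2].
  have y0 : 0 < y := lt_le_trans qm0 y1.
  have [x0 px] : 0 <= psiinv y /\ psi (psiinv y) = y.
    by apply: hinv; rewrite y0 (le_trans y2 (ltW q1)).
  have bx : b <= psiinv y.
    rewrite leNgt; apply/negP => xb.
    have := mon _ _ x0 (ltW xb); rewrite px pb => qy.
    have yq : y = q by apply/le_anti; rewrite qy y2.
    by move: xb; rewrite yq ltxx.
  have xa : psiinv y <= a.
    rewrite leNgt; apply/negP => ax.
    have := mon _ _ a0 (ltW ax); rewrite px pa => yqm.
    have yq : y = q / m%:R by apply/le_anti; rewrite yqm y1.
    by move: ax; rewrite yq ltxx.
  have -> : expR (- (z * psiinv y)) / y = gcond psi (psiinv y) z by rewrite /gcond px.
  have px0 : 0 < psi (psiinv y) * expR (z * psiinv y) by rewrite px mulr_gt0 ?expR_gt0.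
  have := cvx z _ bx xa.
  rewrite !gE ge_min.
  have [h|h] := leP (psi a * expR (z * a)) (psi b * expR (z * b)).
  - move=> hx; apply/orP; right.
    by rewrite lef_pV2 ?posrE.
  - move=> hx; apply/orP; left.
    by rewrite lef_pV2 ?posrE.
have minE : forall z, min_term psiinv m q z = Num.min (gcond psi a z) (gcond psi b z).
  move=> z; rewrite /min_term /=.
  have mm : m%:R * q / m%:R = q by rewrite mulrAC mulfV ?mul1r // lt0r_neq0.
  apply/le_anti/andP; split.
  - apply: min_glb.
    + apply: (bigmin_le' _ _ _ _ 1%N); first by rewrite mem_index_iota /=; lia.
      by rewrite mul1r /gcond pa.
    + apply: (bigmin_le' _ _ _ _ m); first by rewrite mem_index_iota /=; lia.
      by rewrite mm /gcond pb.
  - rewrite big_nat_cond; apply: (big_ind (fun v => Num.min (gcond psi a z) (gcond psi b z) <= v)).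
    + by apply: lowb; rewrite mul1r lexx (ltW qm_lt).
    + by move=> u v hu hv; apply: min_glb.
    + move=> k /andP[/andP[k1 km] _]; apply: lowb.
      rewrite ler_pM2r ?invr_gt0 // ler_peMl ?(ltW q0) ?ler1n //=.
      rewrite ler_pdivrMr // [q * _]mulrC ler_pM2r // ler_nat -ltnS //.
have rel1 : forall z, z <= zstar -> gcond psi b z <= gcond psi a z.
  move=> z hz; rewrite !gE lef_pV2 ?posrE // pa pb.
  have hz' : z * (a - b) <= ln m%:R by rewrite -ler_pdivlMr ?subr_gt0.
  have E1 : expR (z * (a - b)) <= m%:R by rewrite -[X in _ <= X]lnK ?posrE // ler_expR.
  have -> : expR (z * a) = expR (z * (a - b)) * expR (z * b).
    by rewrite -expRD; congr expR; ring.
  by rewrite mulrA ler_pM2r ?expR_gt0 // mulrAC ler_pdivrMr // ler_pM2l.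
have rel2 : forall z, zstar < z -> gcond psi a z <= gcond psi b z.
  move=> z hz; rewrite !gE lef_pV2 ?posrE // pa pb.
  have hz' : ln m%:R < z * (a - b) by rewrite -ltr_pdivrMr ?subr_gt0.
  have E1 : m%:R < expR (z * (a - b)) by rewrite -[X in X < _]lnK ?posrE // ltr_expR.
  have -> : expR (z * a) = expR (z * (a - b)) * expR (z * b).
    by rewrite -expRD; congr expR; ring.
  by rewrite mulrA ler_pM2r ?expR_gt0 // mulrAC ler_pdivlMr // ler_pM2l // ltW.
have point : forall w, Num.min (gcond psi a (Z w)) (gcond psi b (Z w)) =
    gcond psi a (Z w) - (gcond psi a (Z w) - gcond psi b (Z w)) * \1_S (Z w).
  move=> w; rewrite indicE; case: (lerP (Z w) zstar) => hz.
  - have -> : Z w \in S by rewrite /S inE /= in_itv /= hz ltW ?hZ.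
    by rewrite minE_r ?rel1 // mulr1 opprB addrC subrK.
  - have -> : Z w \in S = false by apply/negbTE/negP; rewrite /S inE /= in_itv /= => /andP[_]; rewrite leNgt hz.
    by rewrite minE_l ?rel2 // mulr0 subr0.
have F0 : forall z, 0 <= (gcond psi a z - gcond psi b z) * \1_S z.
  move=> z; rewrite indicE; case: (boolP (z \in S)) => zS; last by rewrite mulr0.
  rewrite mulr1 subr_ge0; apply: rel1.
  by move: zS; rewrite /S inE /= in_itv /= => /andP[].
have mg : forall x, measurable_fun setT (gcond psi x) by move=> x; exact: mexpR.
have mS : measurable S by exact: measurable_itv.
have mF : measurable_fun setT (fun z => (gcond psi a z - gcond psi b z) * \1_S z).
  apply: measurable_funM; first exact: measurable_funB.
  exact: measurable_indic.
have hI : I = (\int[P]_w ((gcond psi a (Z w) - gcond psi b (Z w)) * \1_S (Z w))%:E)%E.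
  rewrite /I integral_mkcond.
  transitivity (\int[distribution P Z]_z ((gcond psi a z - gcond psi b z) * \1_S z)%:E)%E.
    apply: eq_integral => z _; rewrite /patch indicE.
    by case: ifP => _; rewrite ?mulr1 ?mulr0.
  by rewrite ge0_integral_distribution //; apply/measurable_EFinP; exact: mF.
split; last exact: hI.
have g0 : forall x z, 0 <= psi x -> 0 <= gcond psi x z.
  by move=> x z h; rewrite /gcond divr_ge0 ?expR_ge0.
have pa0' : 0 <= psi a by rewrite pa ltW.
have pb0' : 0 <= psi b by rewrite pb ltW.
have one : (\int[P]_w (gcond psi a (Z w))%:E = 1)%E.
  have -> : (1 = (psi a * (psi a)^-1)%:E)%E by rewrite mulfV // pa lt0r_neq0.
  rewrite psiE //; last by rewrite invr_ge0.
  by apply: eq_integral => w _; rewrite /gcond (mulrC (Z w)).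
set J := (\int[P]_w _)%E in hI *.
have H1 : (1 = \int[P]_w (Num.min (gcond psi a (Z w)) (gcond psi b (Z w)))%:E + J)%E.
  rewrite -one /J -ge0_integralD //.
  - by apply: eq_integral => w _; rewrite -EFinD point subrK.
  - by move=> w _; rewrite lee_fin; apply: min_glb; apply: g0.
  - apply/measurable_EFinP; apply: measurableT_comp (measurable_minr (mg a) (mg b)) _.
    by [].
  - by move=> w _; rewrite lee_fin F0.
  - apply/measurable_EFinP; apply: measurableT_comp mF _; by [].
have G : gamma_min = (\int[P]_w (Num.min (gcond psi a (Z w)) (gcond psi b (Z w)))%:E)%E.
  rewrite /gamma_min.
  under eq_integral => z _ do rewrite minE.
  rewrite ge0_integral_distribution //.
  - by apply/measurable_EFinP; exact: measurable_minr (mg a) (mg b).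
  - by move=> z; rewrite lee_fin; apply: min_glb; apply: g0.
have J0 : (0 <= J)%E by apply: integral_ge0 => w _; rewrite lee_fin F0.
have Jfin : J \is a fin_num.
  rewrite ge0_fin_numE // (le_lt_trans _ (ltry 1)) //.
  rewrite H1 leeDr //; apply: integral_ge0 => w _; rewrite lee_fin; apply: min_glb; exact: g0.
by rewrite hI G [in RHS]H1 addeK.
Qed.
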